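(* Consider the center of mass problem in $\mathbb{R}^d$ ($d\ge 1$) where object $i$ has weight $w_i>0$ and its own maximum speed $v_i>0$. There is an absolute constant $C$ and, for every choice of weights and speeds, a fixed query sequence (depending only on the $w_i$ and $v_i$, not on the trajectories) whose measure is at most $C\log n\cdot \mathrm{OPT}(I)$ on every instance $I$ with $n\ge 2$ objects and these weights and speeds. (Explicitly, ordering objects so that $v_1w_1\ge\dots\ge v_nw_n$ and grouping object $i$ into group $\lfloor\log_2 i\rfloor+1$, the strategy that cycles through the groups and, within each group, cycles through its members achieves ratio at most $3(\lfloor\log_2 n\rfloor+1)$.)
   Context: Setting. There are $n\ge 2$ objects in $\mathbb{R}^d$; object $i$ follows a trajectory $p_i:[0,\infty)\to\mathbb{R}^d$ with $|p_i(t)-p_i(s)|\le v_i|t-s|$ for all $s,t$, where $v_i>0$ is a known speed bound for object $i$. The initial positions $p_i(0)$ are known. A query strategy queries one object at each time $t=1,2,3,\dots$; querying object $i$ at time $t$ reveals $p_i(t)$. For $t\ge 0$ let $\tau_i(t)$ be the last time $\le t$ at which object $i$ was queried (or $0$ if never). The uncertainty region of object $i$ at time $t$ is the closed ball $U_i(t)$ of radius $v_i(t-\tau_i(t))$ centered at $p_i(\tau_i(t))$. For a center function $f$ mapping an $n$-tuple of points to a point, the uncertainty region of the center at time $t$ is $\{f(q_1,\dots,q_n): q_i\in U_i(t)\}$. The size of a set is its diameter. The measure of a strategy on an instance is the supremum over $t\in\{1,2,\dots\}$ of the size of the center's uncertainty region at time $t$ (just after the query at time $t$). The optimal measure $\mathrm{OPT}(I)$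 of an instance $I$ is the infimum of the measure over all query sequences, which may be chosen with full knowledge of the trajectories. The center function is the center of mass: $f(q_1,\dots,q_n)=\frac{1}{W}\sum_i w_iq_i$ with $W=\sum_i w_i$. *)

(* Defs.v *)
From HB Require Import structures.
From mathcomp Require Import all_boot all_order all_algebra.
From mathcomp Require Import all_classical all_reals all_analysis.
Set Implicit Arguments. Unset Strict Implicit. Unset Printing Implicit Defensive.
Import Order.TTheory GRing.Theory Num.Theory.
Local Open Scope classical_set_scope.
Local Open Scope ring_scope.

Section Defs.
Variable R : realType.

Definition enorm (d : nat) (x : 'rV[R]_d) : R :=
  Num.sqrt (\sum_(j < d) (x ord0 j) ^+ 2).
Definition edist (d : nat) (x y : 'rV[R]_d) : R := enorm (x - y).

Definition cball (d : nat) (c : 'rV[R]_d) (r : R) : set 'rV[R]_d :=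
  [set y | edist y c <= r].

Definition diam (d : nat) (S : set 'rV[R]_d) : \bar R :=
  ereal_sup [set (edist x y)%:E | x in S & y in S].

Definition speed_bounded (d : nat) (pi : R -> 'rV[R]_d) (vi : R) : Prop :=
  forall s t, 0 <= s -> 0 <= t -> edist (pi t) (pi s) <= vi * `|t - s|.

(* Query sequence: at each time t = 1,2,... the object q t is queried
   (q 0 is irrelevant). last_query q i t = last time <= t at which i was
   queried, or 0 if never. *)
Fixpoint last_query (n : nat) (q : nat -> 'I_n) (i : 'I_n) (t : nat) : nat :=
  match t with
  | 0 => 0
  | t'.+1 => if q t'.+1 == i then t'.+1 else last_query q i t'
  end.

Definition unc_region (d n : nat) (v : 'I_n -> R) (p : 'I_n -> R -> 'rV[R]_d)
  (q : nat -> 'I_n) (i : 'I_n) (t : nat) : set 'rV[R]_d :=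
  let tau := last_query q i t in
  cball (p i tau%:R) (v i * (t%:R - tau%:R)).

Definition center_of_mass (d n : nat) (w : 'I_n -> R) (x : 'I_n -> 'rV[R]_d)
  : 'rV[R]_d :=
  (\sum_(i < n) w i)^-1 *: \sum_(i < n) w i *: x i.

Definition center_region (d n : nat) (w v : 'I_n -> R)
  (p : 'I_n -> R -> 'rV[R]_d) (q : nat -> 'I_n) (t : nat) : set 'rV[R]_d :=
  [set center_of_mass w x | x in
     [set x : 'I_n -> 'rV[R]_d | forall i, unc_region v p q i t (x i)]].

Definition measure_of (d n : nat) (w v : 'I_n -> R)
  (p : 'I_n -> R -> 'rV[R]_d) (q : nat -> 'I_n) : \bar R :=
  ereal_sup [set diam (center_region w v p q t) | t in [set t : nat | (1 <= t)%N]].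

Definition OPT (d n : nat) (w v : 'I_n -> R) (p : 'I_n -> R -> 'rV[R]_d)
  : \bar R :=
  ereal_inf [set measure_of w v p q | q in [set: nat -> 'I_n]].

End Defs.

(* Main.v *)
Require Import Defs.
From HB Require Import structures.
From mathcomp Require Import all_boot all_order all_algebra.
From mathcomp Require Import all_classical all_reals all_analysis.
From mathcomp Require Import ring lra.
Import Order.TTheory GRing.Theory Num.Theory.
Set Implicit Arguments. Unset Strict Implicit. Unset Printing Implicit Defensive.
Local Open Scope ring_scope.

Section Norm.
Variable R : realType.

Lemma cs_sum (d : nat) (x y : 'I_d -> R) :
  (\sum_j x j * y j) ^+ 2 <= (\sum_j x j ^+ 2) * (\sum_j y j ^+ 2).
Proof.
have H : 0 <= \sum_i \sum_j (x i * y j - x j * y i) ^+ 2.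
  by apply: sumr_ge0 => i _; apply: sumr_ge0 => j _; apply: sqr_ge0.
have E : \sum_i \sum_j (x i * y j - x j * y i) ^+ 2 =
   2 * ((\sum_j x j ^+ 2) * (\sum_j y j ^+ 2) - (\sum_j x j * y j) ^+ 2).
  have E1 : \sum_i \sum_j (x i * y j - x j * y i) ^+ 2 =
    \sum_i \sum_j (x i ^+2 * y j ^+ 2) + \sum_i \sum_j (x j ^+2 * y i ^+ 2)
    - 2 * \sum_i \sum_j (x i * y i * (x j * y j)).
    rewrite mulr_sumr -!big_split /= -sumrB; apply: eq_bigr => i _.
    rewrite mulr_sumr -!big_split /= -sumrB; apply: eq_bigr => j _.
    ring.
  rewrite E1 [X in _ + X - _]exchange_big /=.
  have -> : \sum_i \sum_j (x i ^+ 2 * y j ^+ 2) = (\sum_j x j ^+ 2) * (\sum_j y j ^+ 2).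
    by rewrite mulr_suml; apply: eq_bigr => i _; rewrite mulr_sumr.
  have -> : \sum_i \sum_j (x i * y i * (x j * y j)) = (\sum_j x j * y j) ^+ 2.
    by rewrite expr2 mulr_suml; apply: eq_bigr => i _; rewrite mulr_sumr.
  ring.
rewrite E in H; rewrite -subr_ge0; nra.
Qed.

Lemma enorm_ge0 d (x : 'rV[R]_d) : 0 <= enorm x.
Proof. exact: sqrtr_ge0. Qed.

Lemma enormZ d (k : R) (x : 'rV[R]_d) : enorm (k *: x) = `|k| * enorm x.
Proof.
rewrite /enorm.
have -> : \sum_(j < d) (k *: x) ord0 j ^+ 2 = k ^+ 2 * \sum_(j < d) x ord0 j ^+ 2.
  by rewrite mulr_sumr; apply: eq_bigr => j _; rewrite mxE exprMn.
by rewrite sqrtrM ?sqr_ge0 // sqrtr_sqr.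
Qed.

Lemma enormN d (x : 'rV[R]_d) : enorm (- x) = enorm x.
Proof. by rewrite -scaleN1r enormZ normrN normr1 mul1r. Qed.

Lemma enormD d (x y : 'rV[R]_d) : enorm (x + y) <= enorm x + enorm y.
Proof.
rewrite /enorm.
set X := \sum_j x ord0 j ^+ 2; set Y := \sum_j y ord0 j ^+ 2.
set P := \sum_j x ord0 j * y ord0 j.
have X0 : 0 <= X by apply: sumr_ge0 => j _; apply: sqr_ge0.
have Y0 : 0 <= Y by apply: sumr_ge0 => j _; apply: sqr_ge0.
have HP : P <= Num.sqrt X * Num.sqrt Y.
  apply: (le_trans (ler_norm P)); rewrite -sqrtr_sqr -sqrtrM //.
  by rewrite ler_sqrt ?mulr_ge0 //; apply: cs_sum.
have -> : \sum_j (x + y) ord0 j ^+ 2 = X + 2 * P + Y.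
  rewrite /X /Y /P mulr_sumr -!big_split /=; apply: eq_bigr => j _.
  rewrite mxE; ring.
have sX := sqrtr_ge0 X; have sY := sqrtr_ge0 Y.
rewrite -(ger0_norm (addr_ge0 sX sY)) -sqrtr_sqr ler_sqrt ?sqr_ge0 //.
have hX := sqr_sqrtr X0; have hY := sqr_sqrtr Y0.
rewrite expr2 in hX hY; nra.
Qed.

Lemma enorm0 d : enorm (0 : 'rV[R]_d) = 0.
Proof. by rewrite -(scale0r 0) enormZ normr0 mul0r. Qed.

Lemma enorm_sum d (I : finType) (f : I -> 'rV[R]_d) :
  enorm (\sum_i f i) <= \sum_i enorm (f i).
Proof.
apply: (big_ind2 (fun a b => enorm a <= b)); first by rewrite enorm0.
  move=> a b c e h1 h2 /=; apply: le_trans (enormD a c) _; exact: lerD.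
by [].
Qed.

End Norm.
Section Diam.
Variable R : realType.
Variables (d n : nat) (w v : 'I_n -> R) (p : 'I_n -> R -> 'rV[R]_d).
Hypothesis wpos : forall i, 0 < w i.
Hypothesis vpos : forall i, 0 < v i.

Lemma lq_le (q : nat -> 'I_n) i t : (last_query q i t <= t)%N.
Proof. elim: t => //= t IH; case: ifP => // _; exact: leqW. Qed.

Definition rad (q : nat -> 'I_n) i (t : nat) : R :=
  v i * (t%:R - (last_query q i t)%:R).
Definition Fq (q : nat -> 'I_n) (t : nat) : R := \sum_i w i * rad q i t.
Definition Wt : R := \sum_i w i.

Lemma rad_ge0 q i t : 0 <= rad q i t.
Proof.
rewrite /rad mulr_ge0 ?(ltW (vpos i)) // subr_ge0 ler_nat; exact: lq_le.
Qed.

Lemma Wt_gt0 : (0 < n)%N -> 0 < Wt.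
Proof.
move=> n0; rewrite /Wt (bigD1 (Ordinal n0)) //=.
apply: ltr_wpDr; last exact: wpos.
by apply: sumr_ge0 => i _; apply: ltW.
Qed.

Lemma CoM_sub (X Y : 'I_n -> 'rV[R]_d) :
  center_of_mass w X - center_of_mass w Y = Wt^-1 *: \sum_i w i *: (X i - Y i).
Proof.
rewrite /center_of_mass -scalerBr -sumrB; congr (_ *: _).
by apply: eq_bigr => i _; rewrite scalerBr.
Qed.

Lemma diam_up q t :
  (diam (center_region w v p q t) <= (2 * Wt^-1 * Fq q t)%:E)%E.
Proof.
apply: ge_ereal_sup => z [_ [X HX <-] [_ [Y HY <-] <-]].
rewrite lee_fin /Defs.edist CoM_sub enormZ.
have W0 : 0 <= Wt by apply: sumr_ge0 => i _; apply: ltW.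
rewrite ger0_norm ?invr_ge0 // [2 * _]mulrC -mulrA ler_wpM2l ?invr_ge0 //.
apply: le_trans (enorm_sum _) _.
rewrite /Fq mulr_sumr; apply: ler_sum => i _.
rewrite enormZ ger0_norm ?(ltW (wpos i)) // mulrCA ler_wpM2l ?(ltW (wpos i)) //.
have -> : X i - Y i = (X i - p i (last_query q i t)%:R) + - (Y i - p i (last_query q i t)%:R).
  by rewrite opprB addrA subrK.
apply: le_trans (enormD _ _) _; rewrite enormN mulr_natl mulr2n.
by apply: lerD; [exact: HX | exact: HY].
Qed.

Lemma diam_low q t : (0 < d)%N ->
  ((2 * Wt^-1 * Fq q t)%:E <= diam (center_region w v p q t))%E.
Proof.
move=> d0; set j0 : 'I_d := Ordinal d0.
pose e : 'rV[R]_d := \row_j (j == j0)%:R.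
have ne : enorm e = 1.
  rewrite /enorm (bigD1 j0) //= big1 ?addr0; last first.
    by move=> j /negPf hj; rewrite mxE hj expr0n.
  by rewrite mxE eqxx expr1n sqrtr1.
pose X i := p i (last_query q i t)%:R + rad q i t *: e.
pose Y i := p i (last_query q i t)%:R - rad q i t *: e.
have HX : forall i, unc_region v p q i t (X i).
  move=> i; rewrite /unc_region /cball /= /Defs.edist /X addrC addKr enormZ ne mulr1.
  by rewrite ger0_norm ?rad_ge0.
have HY : forall i, unc_region v p q i t (Y i).
  move=> i; rewrite /unc_region /cball /= /Defs.edist /Y addrC addKr enormN enormZ ne mulr1.
  by rewrite ger0_norm ?rad_ge0.
have W0 : 0 <= Wt by apply: sumr_ge0 => i _; apply: ltW.
apply: le_trans (ereal_sup_ubound _); last first.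
  exists (center_of_mass w X); first by exists X.
  exists (center_of_mass w Y); first by exists Y.
  reflexivity.
rewrite lee_fin /Defs.edist CoM_sub enormZ.
have -> : \sum_i w i *: (X i - Y i) = (2 * Fq q t) *: e.
  rewrite /Fq mulr_sumr scaler_suml; apply: eq_bigr => i _.
  rewrite /X /Y.
  have -> : forall c u : 'rV[R]_d, c + u - (c - u) = 2 *: u.
    by move=> c u; rewrite opprB addrC addrA subrK scaler_nat mulr2n.
  by rewrite !scalerA; congr (_ *: _); ring.
have F0 : 0 <= Fq q t.
  by rewrite /Fq sumr_ge0 // => i _; rewrite mulr_ge0 ?rad_ge0 ?(ltW (wpos i)).
rewrite enormZ ne mulr1 !ger0_norm ?invr_ge0 ?mulr_ge0 //.
by rewrite [2 * _]mulrC -mulrA.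
Qed.

End Diam.
Section LQ.
Variables (n : nat) (q : nat -> 'I_n) (i : 'I_n).

Lemma lq_le' t : (last_query q i t <= t)%N.
Proof. elim: t => //= t IH; case: ifP => // _; exact: leqW. Qed.

Lemma lq_q t : (0 < last_query q i t)%N -> q (last_query q i t) = i.
Proof. elim: t => //= t IH; case: ifP => [/eqP //|_]; exact: IH. Qed.

Lemma lq_ge s t : (0 < s)%N -> (s <= t)%N -> q s = i -> (s <= last_query q i t)%N.
Proof.
move=> s0; elim: t => [|t IH]; first by case: s s0.
rewrite leq_eqVlt => /orP [/eqP -> /= -> |]; first by rewrite eqxx.
rewrite ltnS => st qs /=; case: ifP => _ //; first exact: leqW.
exact: IH.
Qed.

Lemma lq_neq t : q t.+1 != i -> last_query q i t.+1 = last_query q i t.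
Proof. by move=> /= /negPf ->. Qed.

End LQ.

Section Rank.
Variable R : realType.
Variables (n : nat) (a : 'I_n -> R).

Definition prec (j i : 'I_n) : bool := (a i < a j) || ((a j == a i) && (j < i)%N).
Definition rank (i : 'I_n) : nat := #|[set j | prec j i]|.

Lemma prec_irr i : prec i i = false.
Proof. by rewrite /prec ltxx ltnn andbF. Qed.

Lemma prec_le j i : prec j i -> a i <= a j.
Proof. by case/orP => [/ltW //|/andP [/eqP -> _]]. Qed.

Lemma prec_tot i j : i != j -> prec i j = ~~ prec j i.
Proof.
move=> ij; rewrite /prec; case: (ltgtP (a i) (a j)) => //= h.
rewrite -leqNgt ltn_neqAle.
by have -> : (nat_of_ord i != j) = true by [].
Qed.

Lemma prec_trans k j i : prec k j -> prec j i -> prec k i.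
Proof.
rewrite /prec => /orP [h1|/andP [/eqP e1 l1]] /orP [h2|/andP [/eqP e2 l2]].
- by rewrite (lt_trans h2 h1).
- by rewrite -e2 h1.
- by rewrite e1 h2.
- by rewrite e1 e2 eqxx (ltn_trans l1 l2) orbT.
Qed.

Lemma rank_lt j i : prec j i -> (rank j < rank i)%N.
Proof.
move=> ji; rewrite /rank; apply: proper_card; apply/properP; split.
  by apply/fintype.subsetP => k; rewrite !inE => kj; apply: prec_trans kj ji.
by exists j; rewrite !inE ?ji ?prec_irr.
Qed.

Lemma rank_inj : injective rank.
Proof.
move=> i j e; apply/eqP; apply/negPn/negP => ij.
case h: (prec i j); first by have := rank_lt h; rewrite e ltnn.
have := prec_tot ij; rewrite h => /esym /negbFE h2.
by have := rank_lt h2; rewrite e ltnn.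
Qed.

Lemma rank_lt_n i : (rank i < n)%N.
Proof.
have : ([set j | prec j i] \subset [set~ i]).
  by apply/fintype.subsetP => j; rewrite !inE; apply: contraTneq => ->; rewrite prec_irr.
move/subset_leq_card => h; apply: leq_ltn_trans h _.
by rewrite cardsC1 card_ord ltn_predL (leq_ltn_trans (leq0n i) (ltn_ord i)).
Qed.

Lemma sym_sum (X Y : 'I_n -> 'I_n -> bool) :
  (forall i, X i i = false) -> (forall i j, i != j -> X i j = ~~ X j i) ->
  (forall i, Y i i = false) -> (forall i j, i != j -> Y i j = ~~ Y j i) ->
  (forall i j, Y j i -> a i <= a j) ->
  (forall i, 0 <= a i) ->
  \sum_i a i * (\sum_j (Y j i : nat)%:R) <= \sum_i a i * (\sum_j (X j i : nat)%:R).
Proof.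
move=> Xi Xt Yi Yt Ym a0.
rewrite -subr_ge0 -sumrB.
set D := \sum_i _.
have E : D = \sum_i \sum_j a i * ((X j i : nat)%:R - (Y j i : nat)%:R).
  by apply: eq_bigr => i _; rewrite -mulrBr -sumrB mulr_sumr.
have E2 : D + D = \sum_i \sum_j (a i * ((X j i : nat)%:R - (Y j i : nat)%:R)
                              + a j * ((X i j : nat)%:R - (Y i j : nat)%:R)).
  rewrite {1}E {1}E [X in _ + X]exchange_big /= -big_split /=.
  by apply: eq_bigr => i _; rewrite -big_split.
suff : 0 <= D + D by rewrite -mulr2n pmulrn_lge0.
rewrite E2; apply: sumr_ge0 => i _; apply: sumr_ge0 => j _.
case: (eqVneq i j) => [->|ij]; first by rewrite Xi Yi subrr mulr0 addr0.
rewrite (Xt _ _ ij) (Yt _ _ ij).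
case hy: (Y j i); case hx: (X j i) => /=.
- by rewrite !subrr !mulr0 addr0.
- by have := Ym _ _ hy; lra.
- have h : Y i j by rewrite (Yt _ _ ij) hy.
  by have := Ym _ _ h; lra.
- by rewrite !subrr !mulr0 addr0.
Qed.

End Rank.
From mathcomp Require Import zify.
Section Age.
Variables (n : nat) (q : nat -> 'I_n) (t : nat).
Definition age (i : 'I_n) : nat := (t - last_query q i t)%N.
Definition kl (j i : 'I_n) : bool := (age j < age i)%N || ((age j == age i) && (j < i)%N).

Lemma age_lq i : (age i < t)%N -> (0 < last_query q i t)%N.
Proof. rewrite /age; have := lq_le' q i t; lia. Qed.

Lemma age_inj i j : (age i < t)%N -> age i = age j -> i = j.
Proof.
move=> ht e; have hi := age_lq ht.
have e' : last_query q i t = last_query q j t.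
  move: e ht; rewrite /age; have := lq_le' q i t; have := lq_le' q j t; lia.
by rewrite -(lq_q hi) e' lq_q // -e'.
Qed.

Lemma card_kl i : (n <= t)%N -> (#|[set j | kl j i]| <= age i)%N.
Proof.
move=> nt.
have C1 : (#|[set j | kl j i]| <= n.-1)%N.
  have : ([set j | kl j i] \subset [set~ i]).
    by apply/fintype.subsetP => j; rewrite !inE; apply: contraTneq => ->; rewrite /kl ltnn eqxx ltnn.
  by move/subset_leq_card; rewrite cardsC1 card_ord.
case: (leqP n.-1 (age i)) => h; first exact: leq_trans C1 h.
have ht : (age i < t)%N by lia.
have lt : forall j, j \in [set j | kl j i] -> (age j < age i)%N.
  move=> j; rewrite inE /kl => /orP [//|/andP [/eqP e l]].
  by have := age_inj ht (esym e) => eij; rewrite eij ltnn in l.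
rewrite cardE -(size_map age) -(size_iota 0 (age i)).
apply: uniq_leq_size.
  rewrite map_inj_in_uniq ?enum_uniq // => j k; rewrite !mem_enum => hj hk e.
  apply: age_inj e; exact: ltn_trans (lt _ hj) ht.
move=> x /mapP [j]; rewrite mem_enum => hj ->; rewrite mem_iota add0n; exact: lt.
Qed.

End Age.
Section Lower.
Variable R : realType.
Variables (n : nat) (w v : 'I_n -> R).
Hypothesis wpos : forall i, 0 < w i.
Hypothesis vpos : forall i, 0 < v i.
Let a i := w i * v i.
Lemma a_pos i : 0 < a i. Proof. by rewrite /a mulr_gt0. Qed.

Lemma Fq_age q t : Fq w v q t = \sum_i a i * (age q t i)%:R.
Proof.
apply: eq_bigr => i _; rewrite /rad /age /a natrB ?lq_le' //; ring.
Qed.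

Lemma card_sum (P : pred 'I_n) : (#|[set j | P j]|)%:R = \sum_j ((P j : nat)%:R : R).
Proof.
rewrite -natr_sum; congr (_%:R).
rewrite -sum1_card big_mkcond /=; apply: eq_bigr => j _; rewrite inE.
by case: (P j).
Qed.

Lemma term_le q t i : a i * (age q t i)%:R <= Fq w v q t.
Proof.
rewrite Fq_age (bigD1 i) //= lerDl; apply: sumr_ge0 => j _.
by rewrite mulr_ge0 ?ler0n ?(ltW (a_pos j)).
Qed.

Lemma rank_lower q : (0 < n)%N -> \sum_i a i * (rank a i)%:R <= Fq w v q n.
Proof.
move=> n0.
apply: (@le_trans _ _ (\sum_i a i * (\sum_j ((kl q n j i : nat)%:R : R)))).
  rewrite /rank.
  under eq_bigr => i _ do rewrite card_sum.
  apply: sym_sum.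
  - by move=> i; rewrite /kl ltnn eqxx ltnn.
  - move=> i j ij; rewrite /kl; case: (ltngtP (age q n i) (age q n j)) => //= _.
    rewrite -leqNgt ltn_neqAle.
    by have -> : (nat_of_ord i != j) = true by [].
  - exact: prec_irr.
  - exact: prec_tot.
  - by move=> i j; apply: prec_le.
  - by move=> i; apply: ltW; apply: a_pos.
rewrite Fq_age; apply: ler_sum => i _; rewrite -card_sum ler_wpM2l ?(ltW (a_pos i)) //.
by rewrite ler_nat; apply: card_kl.
Qed.

Lemma single_lower q i : (2 <= n)%N ->
  exists t, (1 <= t)%N /\ a i <= Fq w v q t.
Proof.
move=> n2.
case: (pselect (exists s, (1 <= s)%N /\ q s != i)) => [[s [s1 qs]]|H].
  exists s; split => //; apply: le_trans (term_le q s i).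
  rewrite ler_pMr ?a_pos // ler1n /age.
  case: s s1 qs => // s _ qs; rewrite lq_neq //; have := lq_le' q i s; lia.
have Hq : forall s, (1 <= s)%N -> q s = i.
  by move=> s s1; apply/eqP; apply: contra_notT H => h; exists s.
pose j : 'I_n := if i == Ordinal (ltn_trans (ltnSn 0) n2) then Ordinal n2 else Ordinal (ltn_trans (ltnSn 0) n2).
have ji : j != i.
  rewrite /j; case: ifP => [/eqP ->|/negbT h]; last by rewrite eq_sym.
  by apply/eqP => /(congr1 val).
have lq0 : forall t, last_query q j t = 0%N.
  move=> t; case: (posnP (last_query q j t)) => // h.
  have := lq_q h; rewrite Hq // => e; by rewrite e eqxx in ji.
exists (Num.trunc (a i / a j)).+1; split => //.
apply: le_trans (term_le q _ j).
rewrite /age lq0 subn0.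
have := truncnS_gt (a i / a j).
rewrite ltr_pdivrMr ?a_pos // mulrC => h; exact: ltW.
Qed.

End Lower.
Section Sched.
Variable R : realType.
Variables (n : nat) (a : 'I_n -> R) (i0 : 'I_n).

Definition grp i := trunc_log 2 (rank a i).+1.
Definition mm := (trunc_log 2 n).+1.
Definition G k := [set i | grp i == k].
Definition sched (t : nat) : 'I_n :=
  let u := t.-1 in let s := enum (G (u %% mm)%N) in nth i0 s ((u %/ mm) %% size s)%N.

Lemma grp_lt i : (grp i < mm)%N.
Proof. by rewrite ltnS; apply: leq_trunc_log; apply: rank_lt_n. Qed.

Lemma card_G k : (#|G k| <= 2 ^ k)%N.
Proof.
rewrite cardE -(size_map (rank a)) -(size_iota (2 ^ k).-1 (2 ^ k)).
apply: uniq_leq_size.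
  by rewrite map_inj_uniq ?enum_uniq //; apply: rank_inj.
move=> x /mapP [j]; rewrite mem_enum inE => /eqP hj ->.
have h1 := trunc_logP (ltnSn 1) (ltn0Sn (rank a j)).
have h2 := trunc_log_ltn (rank a j).+1 (ltnSn 1).
rewrite -/(grp j) hj in h1 h2.
have h3 := expn_gt0 2 k; rewrite expnS in h2.
rewrite mem_iota; lia.
Qed.

Lemma grp_pow i : (2 ^ grp i <= (rank a i).+1)%N.
Proof. exact: trunc_logP (ltnSn 1) (ltn0Sn _). Qed.

Lemma sched_hit i j :
  let k := grp i in let s := enum (G k) in
  sched (k + mm * index i s + 1 + j * (mm * size s)) = i.
Proof.
move=> k s.
have ks : i \in s by rewrite mem_enum inE.
have rS : (index i s < size s)%N by rewrite index_mem.
have km : (k < mm)%N by apply: grp_lt.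
rewrite /sched.
have -> : (k + mm * index i s + 1 + j * (mm * size s)).-1 =
          ((index i s + j * size s) * mm + k)%N.
  by rewrite addn1 /=; ring.
have m0 : (0 < mm)%N by [].
rewrite modnMDl (modn_small km) divnMDl // (divn_small km) addn0.
by rewrite addnC modnMDl (modn_small rS) nth_index.
Qed.

Lemma sched_age i t : (age sched t i <= mm * #|G (grp i)|)%N.
Proof.
set k := grp i; set s := enum (G k).
have ks : i \in s by rewrite mem_enum inE.
have rS : (index i s < size s)%N by rewrite index_mem.
have km : (k < mm)%N by apply: grp_lt.
have cs : #|G k| = size s by rewrite cardE.
rewrite cs.
set c := (k + mm * index i s + 1)%N.
set P := (mm * size s)%N.
have cP : (c <= P)%N.
  rewrite /c /P; have : ((index i s).+1 <= size s)%N by []. nia.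
rewrite /age.
case: (ltnP t c) => tc.
  have := lq_le' sched i t; lia.
set j := ((t - c) %/ P)%N.
have P0 : (0 < P)%N by rewrite /P muln_gt0; apply/andP; split => //; lia.
have hj : (j * P <= t - c)%N by apply: leq_trunc_div.
have hq := sched_hit i j.
have hge : (c + j * P <= last_query sched i t)%N.
  apply: lq_ge hq; first by lia.
  rewrite -/c -/P. move: hj tc; clear; lia.
have hm : (t - c - j * P < P)%N.
  have := divn_eq (t - c) P; rewrite -/j => e.
  have := ltn_pmod (t - c) P0.
  move: e; move: ((t - c) %/ P)%N ((t - c) %% P)%N => x y e h.
  rewrite e; lia.
have := lq_le' sched i t; lia.
Qed.

Lemma sched_age2 i t : (age sched t i <= mm * (rank a i).+1)%N.
Proof.
apply: leq_trans (sched_age i t) _; rewrite leq_mul2l; apply/orP; right.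
exact: leq_trans (card_G _) (grp_pow i).
Qed.

End Sched.
Lemma log_bound (R : realType) (n : nat) : (2 <= n)%N ->
  (3 * (mm n)%:R : R) <= 6 / ln 2 * ln n%:R.
Proof.
move=> n2.
have l2 : (0 : R) < ln 2 by apply: ln_gt0; rewrite ltr1n.
set k := trunc_log 2 n.
have k1 : (0 < k)%N by rewrite /k trunc_log_gt0.
have pk : (2 ^ k <= n)%N by apply: trunc_logP => //; lia.
have hk : (k%:R * ln 2 : R) <= ln n%:R.
  rewrite mulr_natl -lnXn ?ltr0n // -natrX.
  rewrite ler_ln ?posrE ?ltr0n ?expn_gt0 ?ler_nat //; lia.
rewrite /mm -/k.
have : (k%:R : R) <= ln n%:R / ln 2 by rewrite ler_pdivlMr.
have k1' : (1 : R) <= k%:R by rewrite ler1n.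
have l2n : ln 2 != 0 :> R by rewrite gt_eqF.
have -> : 6 / ln 2 * ln n%:R = 6 * (ln n%:R / ln 2) :> R by field.
rewrite -natr1 => h; lra.
Qed.

Theorem theorem5 (R : realType) :
  exists C : R,
  forall (d n : nat), (0 < d)%N -> (2 <= n)%N ->
  forall (w v : 'I_n -> R), (forall i, 0 < w i) -> (forall i, 0 < v i) ->
  exists q : nat -> 'I_n,
  forall p : 'I_n -> R -> 'rV[R]_d,
    (forall i, speed_bounded (p i) (v i)) ->
    (measure_of w v p q <= (C * ln (n%:R))%:E * OPT w v p)%E.
Proof.
exists (6 / ln 2) => d n d0 n2 w v wpos vpos.
have n0 : (0 < n)%N by lia.
pose i0 : 'I_n := Ordinal n0.
pose a i := w i * v i.
have apos : forall i, 0 < a i by move=> i; rewrite mulr_gt0.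
exists (sched a i0) => p _.
set K := \sum_i a i * ((rank a i).+1)%:R.
set L := \sum_i a i * (rank a i)%:R.
have W0 : 0 < Wt w by apply: Wt_gt0.
have c0 : 0 <= 2 / Wt w by rewrite mulr_ge0 ?invr_ge0 // ltW.
have UB : (measure_of w v p (sched a i0) <= (2 / Wt w * ((mm n)%:R * K))%:E)%E.
  apply: ge_ereal_sup => z [t t1 <-].
  apply: le_trans (diam_up v p wpos _ t) _.
  rewrite lee_fin ler_wpM2l // Fq_age /K mulr_sumr; apply: ler_sum => i _.
  rewrite mulrCA ler_wpM2l ?(ltW (apos i)) // -natrM ler_nat.
  exact: sched_age2.
have [ist _ hmin] := @arg_minnP _ i0 predT (rank a) isT.
have KL : K <= 2 * L + a ist.
  have -> : K = L + \sum_i a i.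
    rewrite /K /L -big_split /=; apply: eq_bigr => i _.
    by rewrite -natr1 mulrDr mulr1.
  suff : \sum_i a i <= L + a ist by lra.
  rewrite (bigD1 ist) //= addrC; apply: lerD => //.
  rewrite /L [X in _ <= X](bigD1 ist) //= -(add0r (\sum_(i < n | i != ist) a i)); apply: lerD.
    by rewrite mulr_ge0 ?ler0n ?(ltW (apos _)).
  apply: ler_sum => i hi; rewrite -{1}(mulr1 (a i)) ler_wpM2l ?(ltW (apos i)) //.
  rewrite ler1n lt0n; apply/negP => /eqP r0.
  have := hmin i isT; rewrite r0 leqn0 => /eqP r1.
  have e : i = ist by apply: (@rank_inj _ _ a); rewrite r0 r1.
  by rewrite e eqxx in hi.
have LB : forall q, ((2 / Wt w * K / 3)%:E <= measure_of w v p q)%E.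
  move=> q.
  have h1 : ((2 / Wt w * L)%:E <= measure_of w v p q)%E.
    apply: le_trans (ereal_sup_ubound _); last by exists n => //=; lia.
    apply: le_trans (diam_low p wpos vpos q n d0).
    by rewrite lee_fin ler_wpM2l //; apply: rank_lower.
  have h2 : ((2 / Wt w * a ist)%:E <= measure_of w v p q)%E.
    have [t [t1 ht]] := single_lower wpos vpos q ist n2.
    apply: le_trans (ereal_sup_ubound _); last by exists t.
    apply: le_trans (diam_low p wpos vpos q t d0).
    by rewrite lee_fin ler_wpM2l.
  move: (measure_of w v p q) h1 h2 => M h1 h2.
  case: M h1 h2 => [r h1 h2| _ _ |h1 _]; last 2 first.
  - by rewrite leey.
  - by move: h1; rewrite leeNy_eq.
  rewrite lee_fin in h1; rewrite lee_fin in h2; rewrite lee_fin.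
  have : 2 / Wt w * K <= 2 / Wt w * (2 * L + a ist) by rewrite ler_wpM2l.
  lra.
have OL : ((2 / Wt w * K / 3)%:E <= OPT w v p)%E.
  by apply: le_ereal_inf_tmp => y [q _ <-]; apply: LB.
have K0 : 0 <= K.
  by apply: sumr_ge0 => i _; rewrite mulr_ge0 ?ler0n ?(ltW (apos _)).
apply: le_trans UB _.
have -> : 2 / Wt w * ((mm n)%:R * K) = (3 * (mm n)%:R) * (2 / Wt w * K / 3).
  by field; exact: lt0r_neq0.
rewrite EFinM.
apply: le_trans (lee_wpmul2l _ OL) _.
  by rewrite lee_fin mulr_ge0 ?ler0n.
apply: lee_wpmul2r; last by rewrite lee_fin; apply: log_bound.
apply: le_trans OL; rewrite lee_fin; apply: mulr_ge0; [exact: mulr_ge0 | by rewrite invr_ge0].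
Qed.
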